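(* Let $U$ and $V$ be finite-dimensional Euclidean vector spaces of the same dimension and let $\varphi$ be the endomorphism of $U\oplus V$ given in block form by $$\varphi=\begin{pmatrix}\mu\,\mathrm{Id}+A & M^*\\ M & \mu\,\mathrm{Id}+B\end{pmatrix},$$ where $\mu\in(-1,+\infty)$, $A$ and $B$ are symmetric and traceless endomorphisms of $U$ and $V$ respectively, $M:U\to V$ is linear with adjoint $M^*$ (with respect to the inner products), and $\|M(u)\|\geq\|u\|$ for every $u\in U$. Then $\varphi$ has at least one positive eigenvalue.
   Context: All norms and adjoints are taken with respect to the given Euclidean inner products; $\varphi$ is symmetric with respect to the orthogonal direct sum inner product on $U\oplus V$, so its eigenvalues are real. *)

(* Defs.v *)
From HB Require Import structures.
From mathcomp Require Import all_boot all_order all_algebra.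
Set Implicit Arguments. Unset Strict Implicit. Unset Printing Implicit Defensive.
Import Order.TTheory GRing.Theory Num.Theory.
Local Open Scope ring_scope.

Definition euclid_norm (R : rcfType) (n : nat) (v : 'cV[R]_n) : R :=
  Num.sqrt (\sum_(i < n) v i 0 ^+ 2).

(* The block endomorphism phi of U (+) V = R^n x R^n, acting on column
   vectors; the adjoint of M (w.r.t. standard inner products) is M^T. *)
Definition phi_mx (R : rcfType) (n : nat) (mu : R) (A B M : 'M[R]_n)
  : 'M[R]_(n + n) :=
  block_mx (mu%:M + A) M^T M (mu%:M + B).

(* Main.v *)
From HB Require Import structures.
From mathcomp Require Import all_boot all_order all_algebra.
From mathcomp Require Import complex ring.
Require Import Defs.
Import Order.TTheory GRing.Theory Num.Theory.
Local Open Scope ring_scope.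
Local Open Scope sesquilinear_scope.

Section Gen.
Context {C : numClosedFieldType}.

Lemma spec_eq {m} {H : 'M[C]_m} : H \is hermsymmx ->
  H = (spectralmx H)^t* *m diag_mx (spectral_diag H) *m spectralmx H.
Proof.
move=> Hh; have /orthomx_spectralP HE := hermitian_normalmx Hh.
by rewrite {1}HE invmx_unitary ?spectral_unitarymx.
Qed.

Lemma unit_l {m} (P : 'M[C]_m) : P \is unitarymx -> P^t* *m P = 1%:M.
Proof. by move=> /unitarymxP /mulmx1C. Qed.

Lemma pos_spectral m k (H : 'M[C]_m) (X : 'M[C]_(k, m)) :
  H \is hermsymmx -> 0 < \tr (X *m H *m X^t*) -> exists2 a : C, 0 < a & eigenvalue H a.
Proof.
move=> Hh htr.
have HE := spec_eq Hh.
set P := spectralmx H in HE; set d := spectral_diag H in HE.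
have Pu : P \is unitarymx := spectral_unitarymx H.
have dreal : forall j, d 0 j \is Num.real.
  by move=> j; apply: (mxOverP (hermitian_spectral_diag_real Hh)).
case: (pickP (fun j => 0 < d 0 j)) => [j dj | all0].
  exists (d 0 j) => //; apply/eigenvalueP; exists (row j P).
    rewrite {1}HE !mulmxA -row_mul (unitarymxP Pu) row1 -rowE -row_mul.
    by rewrite row_mul row_diag_mx -scalemxAl -rowE.
  apply/eqP => /(congr1 (fun v => v *m P^t*)) /eqP.
  rewrite -row_mul (unitarymxP Pu) row1 mul0mx => /eqP /rowP /(_ j).
  by rewrite !mxE /= eqxx /= => /eqP; rewrite oner_eq0.
exfalso; suff : \tr (X *m H *m X^t*) <= 0 by move=> /(lt_le_trans htr); rewrite ltxx.
rewrite HE.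
set Y := X *m P^t*.
have -> : X *m (P^t* *m diag_mx d *m P) *m X^t* = Y *m diag_mx d *m Y^t*.
  by rewrite /Y !trmx_mul !map_mxM trmxCK !mulmxA.
rewrite /mxtrace; apply: sumr_le0 => i _; rewrite mul_mx_diag mxE.
apply: sumr_le0 => l _; rewrite !mxE.
have dl : d 0 l <= 0 by rewrite real_leNgt ?real0 ?dreal // all0.
rewrite [_ * d 0 l]mulrC -mulrA; apply: mulr_le0_ge0 => //.
exact: mul_conjC_ge0.
Qed.
Lemma row_eig {m} {H : 'M[C]_m} j : H \is hermsymmx ->
  row j (spectralmx H) *m H = spectral_diag H 0 j *: row j (spectralmx H).
Proof.
move=> Hh; have HE := spec_eq Hh.
set P := spectralmx H in HE *; set d := spectral_diag H in HE *.
have Pu : P \is unitarymx := spectral_unitarymx H.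
rewrite {1}HE !mulmxA -row_mul (unitarymxP Pu) row1 -rowE -row_mul.
by rewrite row_mul row_diag_mx -scalemxAl -rowE.
Qed.

End Gen.

Section Real.
Context {R : rcfType}.
Local Notation f := (real_complex R).

Lemma eig_real m (S : 'M[R]_m) (a : R) :
  eigenvalue (map_mx f S) (f a) -> eigenvalue S a.
Proof. by rewrite !eigenvalue_root_char -map_char_poly fmorph_root. Qed.

Lemma conj_f (x : R) : (f x)^* = f x.
Proof. exact: conjc_real. Qed.

Lemma conj_mx_f m k (S : 'M[R]_(m, k)) : map_mx Num.conj (map_mx f S) = map_mx f S.
Proof. by apply/matrixP => i j; rewrite !mxE conj_f. Qed.

Lemma herm_real m (S : 'M[R]_m) : S^T = S -> map_mx f S \is hermsymmx.
Proof.
move=> hS; apply/is_hermitianmxP; rewrite expr0 scale1r.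
by rewrite -map_trmx conj_mx_f map_trmx hS.
Qed.

Lemma sum_split n (z : 'I_n -> R[i]) (c : 'I_n -> R) :
  \sum_j z j * f (c j) = Complex (\sum_j complex.Re (z j) * c j) (\sum_j complex.Im (z j) * c j).
Proof.
elim/big_rec3: _ => [//|j x y u _ ->].
case: (z j) => a b /=.
apply/eqP; rewrite eq_complex /=; apply/andP; split; apply/eqP; ring.
Qed.

Lemma sqn (w : R[i]) : w * w^* = f (complex.Re w ^+ 2 + complex.Im w ^+ 2).
Proof.
case: w => a b /=.
apply/eqP; rewrite eq_complex /=; apply/andP; split; apply/eqP; ring.
Qed.

Lemma dot_split n (w : 'rV[R[i]]_n) :
  (w *m w^t*) 0 0 = f (\sum_k (complex.Re (w 0 k) ^+ 2 + complex.Im (w 0 k) ^+ 2)).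
Proof.
rewrite mxE rmorph_sum; apply: eq_bigr => k _; rewrite !mxE; exact: sqn.
Qed.

Lemma norm_ineq n (M : 'M[R]_n)
  (hM : forall u : 'cV[R]_n, euclid_norm u <= euclid_norm (M *m u))
  (p : 'rV[R[i]]_n) :
  (p *m p^t*) 0 0 <= ((p *m map_mx f M^T) *m (p *m map_mx f M^T)^t*) 0 0.
Proof.
rewrite !dot_split lecR.
set a : 'cV[R]_n := \col_j complex.Re (p 0 j).
set b : 'cV[R]_n := \col_j complex.Im (p 0 j).
have sq : forall u : 'cV[R]_n, \sum_k u k 0 ^+2 <= \sum_k (M *m u) k 0 ^+ 2.
  move=> u; have := hM u; rewrite /euclid_norm ler_sqrt //.
  by apply: sumr_ge0 => k _; exact: sqr_ge0.
have eRe : forall k, complex.Re ((p *m map_mx f M^T) 0 k) = (M *m a) k 0.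
  move=> k; rewrite !mxE.
  under eq_bigr do rewrite !mxE.
  rewrite sum_split /=; apply: eq_bigr => j _; rewrite !mxE mulrC //.
have eIm : forall k, complex.Im ((p *m map_mx f M^T) 0 k) = (M *m b) k 0.
  move=> k; rewrite !mxE.
  under eq_bigr do rewrite !mxE.
  rewrite sum_split /=; apply: eq_bigr => j _; rewrite !mxE mulrC //.
rewrite !big_split /=.
under [X in _ <= X + _]eq_bigr do rewrite eRe.
under [X in _ <= _ + X]eq_bigr do rewrite eIm.
apply: lerD.
  by apply: le_trans (sq a); apply: ler_sum => k _; rewrite /a mxE.
by apply: le_trans (sq b); apply: ler_sum => k _; rewrite /b mxE.
Qed.

End Real.

Section Main.
Variable R : rcfType.
Local Notation f := (real_complex R).

Lemma final_ineq n (mu : R) (T1 T2 : R[i]) : (0 < n)%N -> -1 < mu ->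
  n%:R <= T1 -> n%:R <= T2 ->
  0 < f (mu *+ n) + T1 + (T2 + f (mu *+ n)).
Proof.
move=> n0 hmu h1 h2.
have m1 : 0 < f mu + 1.
  by rewrite -(rmorph1 f) -rmorphD ltcR -(opprK 1) subr_gt0.
have p : 0 < (f mu + 1) *+ n by rewrite pmulrn_lgt0.
rewrite rmorphMn.
have e : (f mu + 1) *+ n + (f mu + 1) *+ n <= f mu *+ n + T1 + (T2 + f mu *+ n).
  by rewrite mulrnDl [T2 + _]addrC; apply: lerD; apply: lerD.
by apply: lt_le_trans e; apply: addr_gt0.
Qed.

End Main.

Theorem mainTheorem15 (R : rcfType) (n : nat) (mu : R) (A B M : 'M[R]_n) :
  (0 < n)%N ->
  -1 < mu ->
  A^T = A -> B^T = B ->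
  \tr A = 0 -> \tr B = 0 ->
  (forall u : 'cV[R]_n, euclid_norm u <= euclid_norm (M *m u)) ->
  exists2 lambda : R, 0 < lambda & eigenvalue (phi_mx mu A B M)^T lambda.
Proof.
move=> n0 hmu hA hB trA trB hM.
pose f := real_complex R.
set S := phi_mx mu A B M.
have hS : S^T = S.
  by rewrite /S /phi_mx tr_block_mx trmxK !linearD /= !tr_scalar_mx hA hB.
rewrite hS.
set MC := map_mx f M.
set G := map_mx f (M^T *m M).
have Gh : G \is hermsymmx by apply: herm_real; rewrite trmx_mul trmxK.
have GE := spec_eq Gh.
set P := spectralmx G in GE *; set d := spectral_diag G in GE *.
have Pu : P \is unitarymx := spectral_unitarymx G.
have PPt : P *m P^t* = 1%:M by apply/unitarymxP.
have PtP : P^t* *m P = 1%:M by apply: mulmx1C.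
have eG : G = MC^T *m MC by rewrite /G map_mxM map_trmx.
have MCc : (MC^T)^t* = MC by rewrite trmxK conj_mx_f.
have PGP : P *m G *m P^t* = diag_mx d.
  by rewrite GE !mulmxA PPt mul1mx -mulmxA PPt mulmx1.
have PMMP : P *m MC^T *m MC *m P^t* = diag_mx d by rewrite -PGP eG !mulmxA.
have d1 : forall j, 1 <= d 0 j.
  move=> j; have := norm_ineq _ _ hM (row j P).
  have e1 : (row j P *m (row j P)^t*) 0 0 = 1.
    transitivity ((P *m P^t*) j j); first by rewrite !mxE; apply: eq_bigr => k _; rewrite !mxE.
    by rewrite PPt mxE eqxx.
  rewrite e1 -map_trmx -/MC trmx_mul map_mxM MCc !mulmxA -[_ *m MC^T *m MC]mulmxA -eG.
  by rewrite row_eig // -scalemxAl mxE e1 mulr1.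
pose s j := sqrtC (d 0 j).
have s1 : forall j, 1 <= s j.
  move=> j; rewrite /s -sqrtC1 ler_sqrtC ?d1 // qualifE /= ?ler01 //.
  exact: le_trans ler01 (d1 j).
have s0 : forall j, s j != 0 by move=> j; apply: lt0r_neq0; apply: lt_le_trans (s1 j).
have sreal : forall j, s j \is Num.real.
  by move=> j; apply: sqrtC_real; exact: le_trans ler01 (d1 j).
have ssq : forall j, d 0 j = s j * s j by move=> j; rewrite -expr2 sqrtCK.
pose sv := \row_j (s j)^-1.
have svc : (diag_mx sv)^t* = diag_mx sv.
  rewrite tr_diag_mx map_diag_mx; congr diag_mx; apply/rowP => j; rewrite !mxE.
  by apply: conj_Creal; rewrite realV.
pose F := diag_mx sv *m P *m MC^T.
have Ft : F^t* = MC *m P^t* *m diag_mx sv.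
  by rewrite /F !trmx_mul !map_mxM MCc svc mulmxA.
have eD : diag_mx sv *m P *m MC^T *m MC *m P^t* = diag_mx sv *m diag_mx d.
  by rewrite -PMMP !mulmxA.
have FFt : F *m F^t* = 1%:M.
  rewrite Ft /F !mulmxA eD !mulmx_diag; apply/matrixP => i k; rewrite !mxE.
  case: eqP => [->|_]; rewrite ?mulr0n ?mulr1n //.
  by rewrite ssq mulKf // divff.
have FtF : F^t* *m F = 1%:M by apply: mulmx1C.
have T1 : n%:R <= \tr (F *m MC *m P^t*).
  have -> : F *m MC *m P^t* = diag_mx sv *m diag_mx d by rewrite /F -PMMP !mulmxA.
  rewrite mulmx_diag mxtrace_diag (eq_bigr (fun j => s j)); last first.
    by move=> j _; rewrite !mxE ssq mulKf.
  apply: le_trans (ler_sum _ (fun j _ => s1 j)).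
  by rewrite sumr_const card_ord.
have T2 : n%:R <= \tr (P *m MC^T *m F^t*).
  have -> : P *m MC^T *m F^t* = diag_mx d *m diag_mx sv by rewrite Ft -PMMP !mulmxA.
  rewrite mulmx_diag mxtrace_diag (eq_bigr (fun j => s j)); last first.
    by move=> j _; rewrite !mxE ssq mulfK.
  apply: le_trans (ler_sum _ (fun j _ => s1 j)).
  by rewrite sumr_const card_ord.
pose X := row_mx P F.
have eH : map_mx f S = block_mx (map_mx f (mu%:M + A)) MC^T MC (map_mx f (mu%:M + B)).
  by rewrite /S /phi_mx map_block_mx map_trmx.
have XHX : \tr (X *m map_mx f S *m X^t*) =
    f (mu *+ n) + \tr (F *m MC *m P^t*) + (\tr (P *m MC^T *m F^t*) + f (mu *+ n)).
  rewrite eH /X tr_row_mx map_col_mx mul_row_block mul_row_col !mulmxDl !mxtraceD.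
  rewrite [\tr (P *m _ *m _)]mxtrace_mulC mulmxA PtP mul1mx.
  rewrite [\tr (F *m map_mx f (mu%:M + B) *m _)]mxtrace_mulC mulmxA FtF mul1mx.
  by rewrite !trace_map_mx !mxtraceD !mxtrace_scalar trA trB !addr0.
have := pos_spectral _ _ _ X (herm_real _ _ hS).
rewrite XHX => /(_ (final_ineq _ _ _ _ _ n0 hmu T1 T2)) [a a0 ea].
move: a a0 ea => [x y]; rewrite ltcE /= => /andP [/eqP y0 x0].
move=> ea; rewrite y0 in ea; exists x => //; apply: eig_real; exact: ea.
Qed.
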